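(* Let $X$ be an infinite dimensional real Banach space, and let $\psi$ be one of the cardinal functions $s$, $hL$, $hd$. Then $\psi(X^* )=\psi(B_{X^*})$, where $X^*$ and the closed dual unit ball $B_{X^*}$ carry the weak$^*$ topology.
   Context: For a topological space $Z$: $s(Z)=\sup\{|D|: D\subseteq Z \text{ is discrete in its subspace topology}\}$ (spread); $hd(Z)=\sup\{d(Y):Y\subseteq Z\}$ where $d(Y)$ is the least cardinality of a dense subset of $Y$ (hereditary density); $hL(Z)=\sup\{L(Y):Y\subseteq Z\}$ where $L(Y)$ is the least cardinal $\kappa$ such that every open cover of $Y$ has a subcover of cardinality at most $\kappa$ (hereditary Lindelöf degree). The weak$^*$ topology on $X^*$ is generated by the sets $\{x^*: x^*(x)\in I\}$, $x\in X$, $I\subseteq\mathbb R$ an open interval. *)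

(* Defs.v *)
From Stdlib Require Import Reals List.
Open Scope R_scope.

Record BanachSpace := {
  vec :> Type;
  vzero : vec;
  vadd : vec -> vec -> vec;
  vopp : vec -> vec;
  vscal : R -> vec -> vec;
  vnorm : vec -> R;
  vadd_assoc : forall x y z, vadd x (vadd y z) = vadd (vadd x y) z;
  vadd_comm : forall x y, vadd x y = vadd y x;
  vadd_zero : forall x, vadd x vzero = x;
  vadd_opp : forall x, vadd x (vopp x) = vzero;
  vscal_one : forall x, vscal 1 x = x;
  vscal_assoc : forall a b x, vscal a (vscal b x) = vscal (a * b) x;
  vscal_distr_vec : forall a x y, vscal a (vadd x y) = vadd (vscal a x) (vscal a y);
  vscal_distr_R : forall a b x, vscal (a + b) x = vadd (vscal a x) (vscal b x);
  vnorm_nonneg : forall x, 0 <= vnorm x;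
  vnorm_eq0 : forall x, vnorm x = 0 -> x = vzero;
  vnorm_scal : forall a x, vnorm (vscal a x) = Rabs a * vnorm x;
  vnorm_triangle : forall x y, vnorm (vadd x y) <= vnorm x + vnorm y;
  vcomplete : forall u : nat -> vec,
    (forall eps, eps > 0 -> exists N, forall m n, (N <= m)%nat -> (N <= n)%nat ->
        vnorm (vadd (u m) (vopp (u n))) < eps) ->
    exists l, forall eps, eps > 0 -> exists N, forall n, (N <= n)%nat ->
        vnorm (vadd (u n) (vopp l)) < eps
}.

Section Banach.
Variable X : BanachSpace.

Definition in_span (l : list X) (v : X) : Prop :=
  exists c : list R, length c = length l /\
    v = fold_right (vadd X) (vzero X)
          (map (fun p => vscal X (fst p) (snd p)) (combine c l)).

Definition infinite_dimensional : Prop :=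
  forall l : list X, exists v : X, ~ in_span l v.

Definition is_linear (f : X -> R) : Prop :=
  (forall x y, f (vadd X x y) = f x + f y) /\
  (forall a x, f (vscal X a x) = a * f x).

Definition is_bounded (f : X -> R) : Prop :=
  exists C, forall x, Rabs (f x) <= C * vnorm X x.

Definition dual : Type := { f : X -> R | is_linear f /\ is_bounded f }.

Definition in_dual_ball (f : dual) : Prop :=
  forall x, Rabs (proj1_sig f x) <= vnorm X x.

End Banach.

Record TopSpace := { pt : Type; isopen : (pt -> Prop) -> Prop }.

Inductive gen_open {T : Type} (S : (T -> Prop) -> Prop) : (T -> Prop) -> Prop :=
| go_sub : forall U, S U -> gen_open S U
| go_full : gen_open S (fun _ => True)
| go_inter : forall U V, gen_open S U -> gen_open S V ->
    gen_open S (fun x => U x /\ V x)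
| go_union : forall (I : Type) (F : I -> T -> Prop), (forall i, gen_open S (F i)) ->
    gen_open S (fun x => exists i, F i x)
| go_ext : forall U V, gen_open S U -> (forall x, U x <-> V x) -> gen_open S V.

Definition subspace (Z : TopSpace) (Y : pt Z -> Prop) : TopSpace :=
  {| pt := { z : pt Z | Y z };
     isopen := fun U => exists O, isopen Z O /\
                 forall y : { z : pt Z | Y z }, U y <-> O (proj1_sig y) |}.

Definition weakstar_subbasis (X : BanachSpace) (U : dual X -> Prop) : Prop :=
  exists (x : X) (a b : R), forall f, U f <-> (a < proj1_sig f x < b).

Definition dual_weakstar (X : BanachSpace) : TopSpace :=
  {| pt := dual X; isopen := gen_open (weakstar_subbasis X) |}.

Definition dual_ball_weakstar (X : BanachSpace) : TopSpace :=
  subspace (dual_weakstar X) (in_dual_ball X).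

Definition card_le (A K : Type) : Prop :=
  exists f : A -> K, forall a b, f a = f b -> a = b.

Definition discrete (T : TopSpace) : Prop := forall U, isopen T U.

Definition dense (T : TopSpace) (D : pt T -> Prop) : Prop :=
  forall O, isopen T O -> (exists x, O x) -> exists x, O x /\ D x.

Definition spread_le (Z : TopSpace) (K : Type) : Prop :=
  forall D : pt Z -> Prop, discrete (subspace Z D) -> card_le {z | D z} K.

Definition density_le (T : TopSpace) (K : Type) : Prop :=
  exists D : pt T -> Prop, dense T D /\ card_le {x | D x} K.

Definition hdensity_le (Z : TopSpace) (K : Type) : Prop :=
  forall Y : pt Z -> Prop, density_le (subspace Z Y) K.

Definition lindelof_le (T : TopSpace) (K : Type) : Prop :=
  forall U : (pt T -> Prop) -> Prop,
    (forall O, U O -> isopen T O) ->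
    (forall x, exists O, U O /\ O x) ->
    exists V : (pt T -> Prop) -> Prop,
      (forall O, V O -> U O) /\ (forall x, exists O, V O /\ O x) /\
      card_le {O | V O} K.

Definition hlindelof_le (Z : TopSpace) (K : Type) : Prop :=
  forall Y : pt Z -> Prop, lindelof_le (subspace Z Y) K.

(* Main.v *)
Require Import Defs.
From Stdlib Require Import Reals List.
From Stdlib Require Import ClassicalEpsilon FunctionalExtensionality ProofIrrelevance Classical Lra Lia.
From mathcomp Require classical_sets.
Open Scope R_scope.

Lemma vcancel (X : BanachSpace) (a b c : X) : vadd X a b = vadd X a c -> b = c.
Proof.
intros E. assert (E2 : vadd X (vopp X a) (vadd X a b) = vadd X (vopp X a) (vadd X a c)) by (rewrite E; reflexivity).
rewrite !vadd_assoc in E2. rewrite (vadd_comm X (vopp X a) a), vadd_opp in E2.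
rewrite (vadd_comm X (vzero X) b), (vadd_comm X (vzero X) c), !vadd_zero in E2. exact E2.
Qed.

Lemma vscal0 (X : BanachSpace) (x : X) : vscal X 0 x = vzero X.
Proof.
apply (vcancel X (vscal X 0 x)). rewrite vadd_zero, <- vscal_distr_R. f_equal; ring.
Qed.

Lemma vscal_zero (X : BanachSpace) a : vscal X a (vzero X) = vzero X.
Proof.
rewrite <- (vscal0 X (vzero X)), vscal_assoc. f_equal; ring.
Qed.

Lemma vadd0l (X : BanachSpace) (x : X) : vadd X (vzero X) x = x.
Proof. rewrite vadd_comm; apply vadd_zero. Qed.

Lemma vnorm0 (X : BanachSpace) : vnorm X (vzero X) = 0.
Proof. rewrite <- (vscal0 X (vzero X)), vnorm_scal, Rabs_R0; ring. Qed.

Lemma vswap4 (X : BanachSpace) (a b c d : X) :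
  vadd X (vadd X a b) (vadd X c d) = vadd X (vadd X a c) (vadd X b d).
Proof.
rewrite !vadd_assoc. f_equal. rewrite <- !vadd_assoc. f_equal. apply vadd_comm.
Qed.

Lemma vneg_cancel (X : BanachSpace) (y : X) : vadd X (vscal X (-1) y) y = vzero X.
Proof.
rewrite <- (vscal_one X y) at 2. rewrite <- vscal_distr_R.
replace (-1 + 1) with 0 by ring. apply vscal0.
Qed.

Lemma vscal_comb (X : BanachSpace) a b (x : X) : vadd X (vscal X a x) (vscal X b x) = vscal X (a + b) x.
Proof. rewrite vscal_distr_R; reflexivity. Qed.

Lemma decomp_diff (X : BanachSpace) (d1 d2 y : X) t1 t2 :
  vadd X d1 (vscal X t1 y) = vadd X d2 (vscal X t2 y) ->
  vadd X (vadd X d1 (vscal X (-1) d2)) (vscal X (t1 - t2) y) = vzero X.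
Proof.
intros E.
assert (E2 : vadd X (vadd X d1 (vscal X t1 y)) (vadd X (vscal X (-1) d2) (vscal X (- t2) y)) =
             vadd X (vadd X d2 (vscal X t2 y)) (vadd X (vscal X (-1) d2) (vscal X (- t2) y))) by (rewrite E; reflexivity).
rewrite (vswap4 X d1) in E2. rewrite (vswap4 X d2) in E2. rewrite !vscal_comb in E2.
replace (t2 + - t2) with 0 in E2 by ring. rewrite vscal0 in E2.
rewrite (vadd_comm X d2), vneg_cancel, vadd_zero in E2.
replace (t1 + - t2) with (t1 - t2) in E2 by ring. exact E2.
Qed.

Definition good0 (X : BanachSpace) (D : X -> Prop) (f : X -> R) :=
  D (vzero X) /\ (forall x y, D x -> D y -> D (vadd X x y)) /\ (forall a x, D x -> D (vscal X a x)) /\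
  (forall x y, D x -> D y -> f (vadd X x y) = f x + f y) /\ (forall a x, D x -> f (vscal X a x) = a * f x) /\
  (forall x, D x -> f x <= vnorm X x).

Lemma good0_f0 X D f : good0 X D f -> f (vzero X) = 0.
Proof.
intros (D0 & _ & _ & _ & fs & _). rewrite <- (vscal0 X (vzero X)), fs by exact D0. ring.
Qed.

Lemma decomp_unique X D f y (g : good0 X D f) (ny : ~ D y) d1 d2 t1 t2 :
  D d1 -> D d2 -> vadd X d1 (vscal X t1 y) = vadd X d2 (vscal X t2 y) -> d1 = d2 /\ t1 = t2.
Proof.
destruct g as (D0 & Dadd & Dscal & _).
intros H1 H2 E. apply decomp_diff in E.
set (e := vadd X d1 (vscal X (-1) d2)) in E.
assert (De : D e) by (apply Dadd; auto).
destruct (Req_dec t1 t2) as [Et|Nt].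
- split; auto. subst t2. replace (t1 - t1) with 0 in E by ring.
  rewrite vscal0, vadd_zero in E. unfold e in E.
  apply (vcancel X (vscal X (-1) d2)). rewrite vadd_comm, E, vneg_cancel. reflexivity.
- exfalso. apply ny.
  set (s := / (t1 - t2)).
  assert (E2 : vscal X s (vadd X e (vscal X (t1 - t2) y)) = vzero X) by (rewrite E; apply vscal_zero).
  rewrite vscal_distr_vec, vscal_assoc in E2.
  replace (s * (t1 - t2)) with 1 in E2 by (unfold s; field; lra).
  rewrite vscal_one in E2.
  assert (y = vscal X (-1) (vscal X s e)).
  { apply (vcancel X (vscal X s e)). rewrite E2, vadd_comm, vneg_cancel. reflexivity. }
  rewrite H. apply Dscal, Dscal, De.
Qed.

Definition fext (X : BanachSpace) (D : X -> Prop) (f : X -> R) (y : X) (c : R) (x : X) : R :=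
  let pr := epsilon (inhabits (vzero X, 0)) (fun pr => D (fst pr) /\ x = vadd X (fst pr) (vscal X (snd pr) y)) in
  f (fst pr) + snd pr * c.

Lemma fext_eq X D f y c (g : good0 X D f) (ny : ~ D y) d t :
  D d -> fext X D f y c (vadd X d (vscal X t y)) = f d + t * c.
Proof.
intros Dd. unfold fext.
match goal with |- context [epsilon ?i ?P] => assert (HP : P (epsilon i P)) by (apply epsilon_spec; exists (d, t); simpl; auto); set (pr := epsilon i P) in * end.
destruct HP as [H1 H2].
destruct (decomp_unique X D f y g ny _ _ _ _ Dd H1 H2) as [E1 E2]. rewrite <- E1, <- E2. reflexivity.
Qed.

Lemma ext X D f y c (g : good0 X D f) (ny : ~ D y)
 (C1 : forall e, D e -> f e + c <= vnorm X (vadd X e y))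
 (C2 : forall e, D e -> f e - c <= vnorm X (vadd X e (vscal X (-1) y))) :
 exists D' f', good0 X D' f' /\ (forall x, D x -> D' x /\ f' x = f x) /\ D' y /\ f' y = c.
Proof.
pose proof (good0_f0 X D f g) as f0.
pose proof g as (D0 & Dadd & Dscal & fadd & fscal & fle).
exists (fun x => exists d t, D d /\ x = vadd X d (vscal X t y)), (fext X D f y c).
split; [|split; [|split]].
- split; [|split; [|split; [|split; [|split]]]].
  + exists (vzero X), 0. split; auto. rewrite vscal0, vadd_zero; reflexivity.
  + intros x1 x2 [d1 [t1 [H1 ->]]] [d2 [t2 [H2 ->]]].
    exists (vadd X d1 d2), (t1 + t2). split; auto. rewrite vswap4, vscal_comb. reflexivity.
  + intros a x [d [t [H ->]]]. exists (vscal X a d), (a * t). split; auto.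
    rewrite vscal_distr_vec, vscal_assoc. reflexivity.
  + intros x1 x2 [d1 [t1 [H1 ->]]] [d2 [t2 [H2 ->]]].
    rewrite vswap4, vscal_comb, !fext_eq by auto. rewrite fadd by auto. ring.
  + intros a x [d [t [H ->]]]. rewrite vscal_distr_vec, vscal_assoc, !fext_eq by auto.
    rewrite fscal by auto. ring.
  + intros x [d [t [H ->]]]. rewrite fext_eq by auto.
    destruct (Rtotal_order t 0) as [tn|[tz|tp]].
    * set (s := - t). set (e := vscal X (/ s) d).
      assert (De : D e) by (apply Dscal; auto).
      pose proof (C2 e De) as Hc.
      assert (Ev : vscal X s (vadd X e (vscal X (-1) y)) = vadd X d (vscal X t y)).
      { unfold e. rewrite vscal_distr_vec, !vscal_assoc. replace (s * / s) with 1 by (unfold s; field; lra).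
        replace (s * -1) with t by (unfold s; ring). rewrite vscal_one. reflexivity. }
      rewrite <- Ev, vnorm_scal, Rabs_right by (unfold s; lra).
      unfold e in Hc. rewrite fscal in Hc by auto.
      replace (f d + t * c) with (s * (/ s * f d - c)) by (unfold s; field; lra).
      apply Rmult_le_compat_l; [unfold s; lra|exact Hc].
    * subst t. rewrite vscal0, vadd_zero. rewrite Rmult_0_l, Rplus_0_r. apply fle; auto.
    * set (e := vscal X (/ t) d).
      assert (De : D e) by (apply Dscal; auto).
      pose proof (C1 e De) as Hc.
      assert (Ev : vscal X t (vadd X e y) = vadd X d (vscal X t y)).
      { unfold e. rewrite vscal_distr_vec, !vscal_assoc. replace (t * / t) with 1 by (field; lra).
        rewrite vscal_one. reflexivity. }
      rewrite <- Ev, vnorm_scal, Rabs_right by lra.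
      unfold e in Hc. rewrite fscal in Hc by auto.
      replace (f d + t * c) with (t * (/ t * f d + c)) by (field; lra).
      apply Rmult_le_compat_l; [lra|exact Hc].
- intros x Dx. split.
  + exists x, 0. split; auto. rewrite vscal0, vadd_zero; reflexivity.
  + rewrite <- (vadd_zero X x) at 1. rewrite <- (vscal0 X y). rewrite fext_eq by auto. ring.
- exists (vzero X), 1. split; auto. rewrite vscal_one, vadd0l. reflexivity.
- transitivity (fext X D f y c (vadd X (vzero X) (vscal X 1 y))); [f_equal; rewrite vscal_one, vadd0l; reflexivity|]. rewrite fext_eq by auto. rewrite f0. ring.
Qed.

Lemma ext_c X D f y (g : good0 X D f) :
  exists c, (forall e, D e -> f e + c <= vnorm X (vadd X e y)) /\
            (forall e, D e -> f e - c <= vnorm X (vadd X e (vscal X (-1) y))).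
Proof.
pose proof (good0_f0 X D f g) as f0.
pose proof g as (D0 & Dadd & Dscal & fadd & fscal & fle).
assert (key : forall e e', D e -> D e' ->
  f e - vnorm X (vadd X e (vscal X (-1) y)) <= vnorm X (vadd X e' y) - f e').
{ intros e e' He He'.
  assert (f (vadd X e e') <= vnorm X (vadd X (vadd X e (vscal X (-1) y)) (vadd X e' y))).
  { rewrite vswap4, vneg_cancel, vadd_zero. apply fle; auto. }
  rewrite fadd in H by auto.
  pose proof (vnorm_triangle X (vadd X e (vscal X (-1) y)) (vadd X e' y)). lra. }
set (S := fun r => exists e, D e /\ r = f e - vnorm X (vadd X e (vscal X (-1) y))).
destruct (completeness S) as [m [Hub Hlub]].
- exists (vnorm X (vadd X (vzero X) y) - f (vzero X)). intros r [e [He ->]]. apply key; auto.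
- exists (f (vzero X) - vnorm X (vadd X (vzero X) (vscal X (-1) y))). exists (vzero X); auto.
- exists m. split.
  + intros e' He'. assert (m <= vnorm X (vadd X e' y) - f e'); [|lra].
    apply Hlub. intros r [e [He ->]]. apply key; auto.
  + intros e He. assert (f e - vnorm X (vadd X e (vscal X (-1) y)) <= m); [|lra].
    apply Hub. exists e; auto.
Qed.

Definition PT (X : BanachSpace) (x0 : X) :=
  {p : (X -> Prop) * (X -> R) | good0 X (fst p) (snd p) /\ fst p x0 /\ snd p x0 = vnorm X x0}.

Definition PD {X x0} (p : PT X x0) := fst (proj1_sig p).
Definition PF {X x0} (p : PT X x0) := snd (proj1_sig p).

Definition Rp {X x0} (p q : PT X x0) : Prop :=
  forall x, PD p x -> PD q x /\ PF q x = PF p x.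

Definition Rb {X x0} (p q : PT X x0) : bool :=
  if excluded_middle_informative (Rp p q) then true else false.

Lemma RbP {X x0} (p q : PT X x0) : Rb p q = true <-> Rp p q.
Proof. unfold Rb; destruct excluded_middle_informative; split; auto; discriminate. Qed.

Lemma chain_ub X x0 (t0 : PT X x0) (A : PT X x0 -> Prop)
  (tot : forall s t, A s -> A t -> Rp s t \/ Rp t s) : exists u, forall s, A s -> Rp s u.
Proof.
destruct (classic (exists a, A a)) as [[a0 Aa0]|NA].
2:{ exists t0. intros s As. exfalso; eauto. }
set (Du := fun x => exists a, A a /\ PD a x).
set (ch := fun x => epsilon (inhabits t0) (fun a => A a /\ PD a x)).
set (fu := fun x => PF (ch x) x).
assert (fu_eq : forall a x, A a -> PD a x -> fu x = PF a x).
{ intros a x Aa Dx. unfold fu.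
  assert (Hc : A (ch x) /\ PD (ch x) x) by (apply epsilon_spec; eauto).
  destruct Hc as [Ac Dc].
  destruct (tot a (ch x) Aa Ac) as [R1|R1].
  - apply R1; auto.
  - symmetry; apply R1; auto. }
assert (two : forall a b x y, A a -> A b -> PD a x -> PD b y -> exists c, A c /\ PD c x /\ PD c y).
{ intros a b x y Aa Ab Dx Dy. destruct (tot a b Aa Ab) as [R1|R1].
  - exists b; split; auto; split; auto; apply R1; auto.
  - exists a; split; auto; split; auto; apply R1; auto. }
assert (G : good0 X Du fu).
{ split; [|split; [|split; [|split; [|split]]]].
  - exists a0; split; auto. destruct (proj2_sig a0) as [(D0 & _) _]; exact D0.
  - intros x y [a [Aa Dx]] [b [Ab Dy]]. destruct (two a b x y Aa Ab Dx Dy) as [c [Ac [Dcx Dcy]]].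
    exists c; split; auto. destruct (proj2_sig c) as [(_ & Dadd & _) _]; apply Dadd; auto.
  - intros r x [a [Aa Dx]]. exists a; split; auto. destruct (proj2_sig a) as [(_ & _ & Dscal & _) _]; apply Dscal; auto.
  - intros x y [a [Aa Dx]] [b [Ab Dy]]. destruct (two a b x y Aa Ab Dx Dy) as [c [Ac [Dcx Dcy]]].
    destruct (proj2_sig c) as [(_ & Dadd & _ & fadd & _) _].
    rewrite (fu_eq c x), (fu_eq c y), (fu_eq c (vadd X x y)); auto. apply fadd; auto. apply Dadd; auto.
  - intros r x [a [Aa Dx]]. destruct (proj2_sig a) as [(_ & _ & Dscal & _ & fscal & _) _].
    rewrite (fu_eq a x), (fu_eq a (vscal X r x)); auto. apply fscal; auto. apply Dscal; auto.
  - intros x [a [Aa Dx]]. destruct (proj2_sig a) as [(_ & _ & _ & _ & _ & fle) _].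
    rewrite (fu_eq a x); auto. apply fle; auto. }
assert (Hx0 : Du x0 /\ fu x0 = vnorm X x0).
{ destruct (proj2_sig a0) as [_ [Dx0 fx0]]. split; [exists a0; auto|].
  rewrite (fu_eq a0); auto. }
exists (exist _ (Du, fu) (conj G Hx0)).
intros s As x Dx. unfold PD, PF; simpl. split.
- exists s; auto.
- apply fu_eq; auto.
Qed.

Lemma HB (X : BanachSpace) (hX : infinite_dimensional X) :
  exists (G : dual X) x0, in_dual_ball X G /\ proj1_sig G x0 = vnorm X x0 /\ 0 < vnorm X x0.
Proof.
destruct (hX nil) as [x0 Hx0].
assert (nz : x0 <> vzero X).
{ intros ->. apply Hx0. exists nil. simpl; auto. }
assert (npos : 0 < vnorm X x0).
{ pose proof (vnorm_nonneg X x0). destruct (Rle_lt_or_eq_dec _ _ H); auto.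
  exfalso; apply nz, vnorm_eq0; auto. }
assert (g0 : good0 X (fun v => v = vzero X) (fun _ => 0)).
{ split; [|split; [|split; [|split; [|split]]]]; intros; subst; try reflexivity.
  - apply vadd_zero.
  - apply vscal_zero.
  - ring.
  - ring.
  - apply vnorm_nonneg. }
destruct (ext X _ _ x0 (vnorm X x0) g0 nz) as [D1 [f1 [g1 [_ [D1x0 f1x0]]]]].
{ intros e ->. rewrite vadd0l. lra. }
{ intros e ->. pose proof (vnorm_nonneg X (vadd X (vzero X) (vscal X (-1) x0))). lra. }
set (t0 := exist _ (D1, f1) (conj g1 (conj D1x0 f1x0)) : PT X x0).
destruct (@classical_sets.ZL_preorder (PT X x0) t0 Rb) as [t Ht].
- intros t'. apply RbP. intros x Dx; auto.
- intros r s u H1 H2. apply RbP in H1, H2. apply RbP. intros x Dx.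
  destruct (H1 x Dx) as [D2 E2]. destruct (H2 x D2) as [D3 E3]. split; auto. congruence.
- intros A tot. destruct (chain_ub X x0 t0 A) as [u Hu].
  + intros s t' As At. destruct (tot s t' As At) as [R1|R1]; [left|right]; apply RbP; exact R1.
  + exists u. intros s As. apply RbP; auto.
- destruct (proj2_sig t) as [gt [Dtx0 ftx0]].
  assert (full : forall y, PD t y).
  { intros y. apply NNPP; intros ny.
    destruct (ext_c X (PD t) (PF t) y gt) as [c [C1 C2]].
    destruct (ext X _ _ y c gt ny C1 C2) as [D' [f' [g' [Hext [D'y _]]]]].
    destruct (Hext x0 Dtx0) as [D'x0 f'x0].
    set (t' := exist _ (D', f') (conj g' (conj D'x0 (eq_trans f'x0 ftx0))) : PT X x0).
    assert (R1 : Rp t t') by (intros x Dx; apply Hext; auto).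
    apply RbP in R1. apply Ht in R1. apply RbP in R1.
    apply ny. apply (R1 y). exact D'y. }
  destruct gt as (_ & _ & _ & fadd & fscal & fle).
  assert (babs : forall x, Rabs (PF t x) <= vnorm X x).
  { intros x. apply Rabs_le. split; [|apply fle, full].
    pose proof (fle (vscal X (-1) x) (full _)). rewrite fscal, vnorm_scal in H by apply full.
    rewrite Rabs_left in H by lra. unfold PF in *. lra. }
  assert (Hd : is_linear X (PF t) /\ is_bounded X (PF t)).
  { split; [split|].
    - intros; apply fadd; apply full.
    - intros; apply fscal; apply full.
    - exists 1. intros x; rewrite Rmult_1_l; apply babs. }
  exists (exist _ (PF t) Hd), x0. split; [|split]; auto.
  all: try (intros x; apply babs).
Qed.

Lemma sig_eq' {T} (P : T -> Prop) (a b : {x | P x}) : proj1_sig a = proj1_sig b -> a = b.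
Proof. destruct a, b; simpl; intros ->; f_equal; apply proof_irrelevance. Qed.

Lemma dual_ext (X : BanachSpace) (f g : dual X) :
  (forall x, proj1_sig f x = proj1_sig g x) -> f = g.
Proof. intros E; apply sig_eq'; apply functional_extensionality; exact E. Qed.

Lemma daff_prop (X : BanachSpace) (a b : R) (f G : dual X) :
  is_linear X (fun x => a * proj1_sig f x + b * proj1_sig G x) /\
  is_bounded X (fun x => a * proj1_sig f x + b * proj1_sig G x).
Proof.
destruct f as [f [[fa fs] [Cf HCf]]], G as [g [[ga gs] [Cg HCg]]]; simpl.
split; [split|].
- intros x y; rewrite fa, ga; ring.
- intros c x; rewrite fs, gs; ring.
- exists (Rabs a * Cf + Rabs b * Cg). intros x.
  eapply Rle_trans; [apply Rabs_triang|]. rewrite !Rabs_mult.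
  pose proof (HCf x); pose proof (HCg x).
  pose proof (Rabs_pos a); pose proof (Rabs_pos b).
  assert (Rabs a * Rabs (f x) <= Rabs a * (Cf * vnorm X x)) by (apply Rmult_le_compat_l; auto).
  assert (Rabs b * Rabs (g x) <= Rabs b * (Cg * vnorm X x)) by (apply Rmult_le_compat_l; auto).
  nra.
Qed.

Definition daff (X : BanachSpace) (a b : R) (f G : dual X) : dual X :=
  exist _ (fun x => a * proj1_sig f x + b * proj1_sig G x) (daff_prop X a b f G).

Lemma dual_scal (X : BanachSpace) (f : dual X) a x : proj1_sig f (vscal X a x) = a * proj1_sig f x.
Proof. destruct (proj2_sig f) as [[_ fs] _]; apply fs. Qed.

Lemma preimage_open (X : BanachSpace) (a b : R) (G : dual X) (U : dual X -> Prop) :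
  gen_open (weakstar_subbasis X) U ->
  gen_open (weakstar_subbasis X) (fun g => U (daff X a b g G)).
Proof.
intros HU; induction HU.
- destruct H as [x [al [be Hx]]]. apply go_sub.
  exists (vscal X a x), (al - b * proj1_sig G x), (be - b * proj1_sig G x).
  intros f. rewrite Hx. simpl. rewrite dual_scal. lra.
- apply go_full.
- apply go_inter; auto.
- apply (go_union _ I (fun i g => F i (daff X a b g G))). auto.
- eapply go_ext; [eassumption|]. intros x; simpl; auto.
Qed.

Lemma nf_ex (X : BanachSpace) (f : dual X) :
  exists n : nat, forall x, Rabs (proj1_sig f x) <= INR n * vnorm X x.
Proof.
destruct (proj2_sig f) as [_ [C HC]].
destruct (INR_archimed 1 C) as [n Hn]; [lra|].
exists n; intros x. eapply Rle_trans; [apply HC|].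
apply Rmult_le_compat_r; [apply vnorm_nonneg|lra].
Qed.

Definition nf (X : BanachSpace) (f : dual X) : nat :=
  proj1_sig (constructive_indefinite_description _ (nf_ex X f)).

Lemma nfP (X : BanachSpace) (f : dual X) x : Rabs (proj1_sig f x) <= INR (nf X f) * vnorm X x.
Proof. unfold nf; destruct constructive_indefinite_description; simpl; auto. Qed.

Definition sn (n : nat) : R := (/4) ^ n.
Definition lam (n : nat) : R := sn n / (16 * (INR n + 1)).

Lemma sn_pos n : 0 < sn n.
Proof. unfold sn; apply pow_lt; lra. Qed.
Lemma sn_le1 n : sn n <= 1.
Proof. unfold sn. rewrite pow_inv. rewrite <- Rinv_1.
  assert (1 <= 4 ^ n) by (change 1 with (4 ^ 0); apply Rle_pow; [lra|lia]).
  apply Rinv_le_contravar; lra. Qed.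
Lemma lam_pos n : 0 < lam n.
Proof. unfold lam. pose proof (sn_pos n); pose proof (pos_INR n).
  apply Rdiv_lt_0_compat; lra. Qed.
Lemma lam_n n : lam n * INR n <= sn n / 16.
Proof. pose proof (sn_pos n); pose proof (pos_INR n).
  replace (lam n * INR n) with ((sn n / 16) * (INR n / (INR n + 1))) by (unfold lam; field; lra).
  assert (Hq : INR n / (INR n + 1) <= 1).
  { unfold Rdiv; apply (Rmult_le_reg_r (INR n+1)); [lra|]; rewrite Rmult_assoc, Rinv_l; lra. }
  rewrite <- (Rmult_1_r (sn n / 16)) at 2. apply Rmult_le_compat_l; lra.
Qed.

Lemma sn_mono n m : (n < m)%nat -> sn m <= sn n / 4.
Proof.
intros Hnm. unfold sn. rewrite !pow_inv.
replace (/ 4 ^ n / 4) with (/ (4 ^ S n)) by (simpl; field; apply pow_nonzero; lra).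
apply Rinv_le_contravar; [apply pow_lt; lra|]. apply Rle_pow; [lra|lia].
Qed.

Definition hmap (X : BanachSpace) (G : dual X) n f := daff X (lam n) (sn n / 2) f G.
Definition kmap (X : BanachSpace) (G : dual X) n g := daff X (/ lam n) (- (sn n / 2) / lam n) g G.

Lemma kh X G n f : kmap X G n (hmap X G n f) = f.
Proof. apply dual_ext; intros x; unfold kmap, hmap; simpl.
  pose proof (lam_pos n). field. lra. Qed.

Definition Win (X : BanachSpace) (x0 : X) (nu : R) n (g : dual X) :=
  3/8 * sn n * nu < proj1_sig g x0 < 5/8 * sn n * nu.

Lemma hW X G x0 (Gx0 : proj1_sig G x0 = vnorm X x0) (nupos : 0 < vnorm X x0) f :
  Win X x0 (vnorm X x0) (nf X f) (hmap X G (nf X f) f).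
Proof.
unfold Win, hmap; simpl. rewrite Gx0. set (n := nf X f).
pose proof (nfP X f x0) as Hb. fold n in Hb.
pose proof (lam_n n). pose proof (lam_pos n). pose proof (sn_pos n).
assert (Hl : lam n * Rabs (proj1_sig f x0) <= sn n / 16 * vnorm X x0).
{ eapply Rle_trans; [apply Rmult_le_compat_l; [lra|exact Hb]|]. rewrite <- Rmult_assoc.
  apply Rmult_le_compat_r; [lra|exact (lam_n n)]. }
pose proof (Rle_abs (proj1_sig f x0)). pose proof (Rle_abs (- proj1_sig f x0)). rewrite Rabs_Ropp in *.
nra.
Qed.

Lemma Wdisj X x0 nu (nupos : 0 < nu) n m g : Win X x0 nu n g -> Win X x0 nu m g -> n = m.
Proof.
unfold Win; intros Hn Hm.
destruct (Nat.lt_trichotomy n m) as [H|[H|H]]; auto; exfalso.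
- pose proof (sn_mono n m H). pose proof (sn_pos n). pose proof (sn_pos m). nra.
- pose proof (sn_mono m n H). pose proof (sn_pos n). pose proof (sn_pos m). nra.
Qed.

Lemma hball X G (GB : in_dual_ball X G) f : in_dual_ball X (hmap X G (nf X f) f).
Proof.
intros x. unfold hmap; simpl. set (n := nf X f).
pose proof (nfP X f x) as Hb. fold n in Hb. pose proof (GB x) as Hg.
pose proof (lam_n n). pose proof (lam_pos n). pose proof (sn_pos n). pose proof (sn_le1 n).
pose proof (vnorm_nonneg X x).
eapply Rle_trans; [apply Rabs_triang|]. rewrite !Rabs_mult, (Rabs_right (lam n)), (Rabs_right (sn n / 2)) by lra.
assert (lam n * Rabs (proj1_sig f x) <= sn n / 16 * vnorm X x).
{ eapply Rle_trans; [apply Rmult_le_compat_l; [lra|exact Hb]|]. rewrite <- Rmult_assoc.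
  apply Rmult_le_compat_r; [lra|exact (lam_n n)]. }
assert (sn n / 2 * Rabs (proj1_sig G x) <= sn n / 2 * vnorm X x) by (apply Rmult_le_compat_l; lra).
nra.
Qed.
Lemma sig_eq {T} (P : T -> Prop) (a b : {x | P x}) : proj1_sig a = proj1_sig b -> a = b.
Proof. destruct a, b; simpl; intros ->; f_equal; apply proof_irrelevance. Qed.

Lemma transfer (A Z : TopSpace) (H : pt A -> pt Z)
  (Hinj : forall a b, H a = H b -> a = b)
  (Hop : forall O, isopen A O -> exists Q, isopen Z Q /\ forall a, Q (H a) <-> O a)
  (K : Type) :
  (spread_le Z K -> spread_le A K) /\ (hlindelof_le Z K -> hlindelof_le A K) /\
  (hdensity_le Z K -> hdensity_le A K).
Proof.
split; [|split].
- intros SZ D HD.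
  pose (D' := fun z => exists a, D a /\ H a = z).
  assert (disc : discrete (subspace Z D')).
  { intros U. simpl.
    pose (Up := fun d : {a | D a} => U (exist _ (H (proj1_sig d)) (ex_intro _ (proj1_sig d) (conj (proj2_sig d) eq_refl)))).
    destruct (HD Up) as [O [HO HOe]].
    destruct (Hop O HO) as [Q [HQ HQe]].
    exists Q; split; [exact HQ|].
    intros [z [a [Da Ha]]]; simpl. subst z.
    rewrite HQe. rewrite <- (HOe (exist _ a Da)). unfold Up; simpl.
    replace (exist _ (H a) _ : {z | D' z}) with (exist D' (H a) (ex_intro _ a (conj Da eq_refl))) by (apply sig_eq; reflexivity).
    tauto. }
  destruct (SZ D' disc) as [f Hf].
  exists (fun d => f (exist _ (H (proj1_sig d)) (ex_intro _ (proj1_sig d) (conj (proj2_sig d) eq_refl)))).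
  intros [a Da] [b Db] E. apply Hf in E. apply (f_equal (@proj1_sig _ _)) in E. simpl in E.
  apply Hinj in E. apply sig_eq; exact E.
- intros LZ Y U Uop Ucov.
  pose (Y' := fun z => exists a, Y a /\ H a = z).
  pose (img := fun (O : {a | Y a} -> Prop) (y' : {z | Y' z}) =>
          exists a (pa : Y a), H a = proj1_sig y' /\ O (exist _ a pa)).
  pose (U' := fun P => exists O, U O /\ P = img O).
  assert (U'op : forall P, U' P -> isopen (subspace Z Y') P).
  { intros P [O [UO ->]]. destruct (Uop O UO) as [O0 [HO0 HO0e]].
    destruct (Hop O0 HO0) as [Q [HQ HQe]]. exists Q; split; [exact HQ|].
    intros [z [a [Ya Ha]]]; simpl; subst z. unfold img; simpl. rewrite HQe.
    split.
    - intros [b [pb [Hb Ob]]]. apply Hinj in Hb; subst b.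
      apply (HO0e (exist _ a pb)) in Ob. exact Ob.
    - intros Oa. exists a, Ya. split; [reflexivity|]. apply (HO0e (exist _ a Ya)); exact Oa. }
  assert (U'cov : forall y, exists P, U' P /\ P y).
  { intros [z [a [Ya Ha]]]. destruct (Ucov (exist _ a Ya)) as [O [UO Oa]].
    exists (img O); split; [exists O; split; auto|].
    exists a, Ya; split; auto. }
  destruct (LZ Y' U' U'op U'cov) as [V' [V'U [V'cov [f Hf]]]].
  pose (rep := fun P => epsilon (inhabits (fun _ : {a | Y a} => True)) (fun O => U O /\ P = img O)).
  assert (repP : forall P, U' P -> U (rep P) /\ P = img (rep P)).
  { intros P HP. unfold rep. apply epsilon_spec. exact HP. }
  exists (fun O => exists P, V' P /\ O = rep P).
  split; [|split].
  + intros O [P [VP ->]]. apply repP, V'U, VP.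
  + intros [a Ya].
    destruct (V'cov (exist _ (H a) (ex_intro _ a (conj Ya eq_refl)))) as [P [VP Pa]].
    exists (rep P); split; [exists P; auto|].
    destruct (repP P (V'U P VP)) as [_ E]. rewrite E in Pa.
    destruct Pa as [b [pb [Hb Ob]]]. simpl in Hb. apply Hinj in Hb. subst b.
    rewrite (proof_irrelevance _ Ya pb). exact Ob.
  + assert (ch : forall s : {O | exists P, V' P /\ O = rep P}, {P | V' P /\ proj1_sig s = rep P}).
    { intros s. apply constructive_indefinite_description. exact (proj2_sig s). }
    exists (fun s => f (exist _ (proj1_sig (ch s)) (proj1 (proj2_sig (ch s))))).
    intros s t E. apply Hf in E. apply (f_equal (@proj1_sig _ _)) in E. simpl in E.
    apply sig_eq. pose proof (proj2 (proj2_sig (ch s))) as E1. pose proof (proj2 (proj2_sig (ch t))) as E2. simpl in E1, E2. etransitivity; [exact E1|]. etransitivity; [|symmetry; exact E2]. f_equal; exact E.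
- intros DZ Y.
  pose (Y' := fun z => exists a, Y a /\ H a = z).
  destruct (DZ Y') as [E' [dE' [f Hf]]].
  pose (emb := fun y : {a | Y a} => exist Y' (H (proj1_sig y)) (ex_intro _ (proj1_sig y) (conj (proj2_sig y) eq_refl))).
  exists (fun y => E' (emb y)). split.
  + intros O [O0 [HO0 HO0e]] [y Oy].
    destruct (Hop O0 HO0) as [Q [HQ HQe]].
    destruct (dE' (fun y' => Q (proj1_sig y'))) as [y' [Qy' Ey']].
    * exists Q; split; [exact HQ|]. intros; tauto.
    * exists (emb y). simpl. apply HQe. apply HO0e. exact Oy.
    * destruct y' as [z [a [Ya Ha]]]. subst z. simpl in Qy'.
      exists (exist _ a Ya). split.
      -- apply HO0e. simpl. apply HQe. exact Qy'.
      -- unfold emb; simpl.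
         replace (exist Y' (H a) _) with (exist Y' (H a) (ex_intro _ a (conj Ya eq_refl))) in Ey' by (apply sig_eq; reflexivity).
         exact Ey'.
  + exists (fun e : {y | E' (emb y)} => f (exist E' (emb (proj1_sig e)) (proj2_sig e))).
    intros [a Ea] [b Eb] E. apply Hf in E. apply (f_equal (@proj1_sig _ _)) in E. simpl in E.
    apply (f_equal (@proj1_sig _ _)) in E. simpl in E. apply Hinj in E. apply sig_eq. simpl. apply sig_eq. exact E.
Qed.

Definition Hm X G (GB : in_dual_ball X G) (f : dual X) : pt (dual_ball_weakstar X) :=
  exist _ (hmap X G (nf X f) f) (hball X G GB f).

Lemma hard X G x0 (GB : in_dual_ball X G) (Gx0 : proj1_sig G x0 = vnorm X x0)
  (nupos : 0 < vnorm X x0) (K : Type) :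
  (spread_le (dual_ball_weakstar X) K -> spread_le (dual_weakstar X) K) /\
  (hlindelof_le (dual_ball_weakstar X) K -> hlindelof_le (dual_weakstar X) K) /\
  (hdensity_le (dual_ball_weakstar X) K -> hdensity_le (dual_weakstar X) K).
Proof.
apply (transfer (dual_weakstar X) (dual_ball_weakstar X) (Hm X G GB)).
- intros f f' E. apply (f_equal (@proj1_sig _ _)) in E. simpl in E.
  assert (Hn : nf X f = nf X f').
  { apply (Wdisj X x0 (vnorm X x0) nupos _ _ (hmap X G (nf X f) f)).
    - apply hW; auto.
    - rewrite E; apply hW; auto. }
  rewrite <- (kh X G (nf X f) f), <- (kh X G (nf X f') f'), <- Hn, E, Hn. reflexivity.
- intros O HO.
  exists (fun b => (fun g => exists n, Win X x0 (vnorm X x0) n g /\ O (kmap X G n g)) (proj1_sig b)).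
  split.
  + exists (fun g => exists n, Win X x0 (vnorm X x0) n g /\ O (kmap X G n g)). split; [|intros; tauto].
    simpl. apply (go_union _ nat (fun n g => Win X x0 (vnorm X x0) n g /\ O (kmap X G n g))).
    intros n. apply go_inter.
    * apply go_sub. exists x0, (3/8 * sn n * vnorm X x0), (5/8 * sn n * vnorm X x0). intros; unfold Win; tauto.
    * apply (preimage_open X _ _ G O HO).
  + intros f. simpl. split.
    * intros [n [Wn On]]. assert (n = nf X f) by (eapply Wdisj; [exact nupos|exact Wn|apply hW; auto]).
      subst n. rewrite kh in On. exact On.
    * intros Of. exists (nf X f). split; [apply hW; auto|]. rewrite kh; exact Of.
Qed.

Lemma easy X (K : Type) :
  (spread_le (dual_weakstar X) K -> spread_le (dual_ball_weakstar X) K) /\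
  (hlindelof_le (dual_weakstar X) K -> hlindelof_le (dual_ball_weakstar X) K) /\
  (hdensity_le (dual_weakstar X) K -> hdensity_le (dual_ball_weakstar X) K).
Proof.
apply (transfer (dual_ball_weakstar X) (dual_weakstar X) (@proj1_sig _ _)).
- intros a b E; apply sig_eq; exact E.
- intros O [O0 [HO0 E]]. exists O0; split; auto. intros a; rewrite E; tauto.
Qed.

Theorem mainTheorem1 (X : BanachSpace) (hX : infinite_dimensional X) (K : Type) :
  (spread_le (dual_weakstar X) K <-> spread_le (dual_ball_weakstar X) K) /\
  (hlindelof_le (dual_weakstar X) K <-> hlindelof_le (dual_ball_weakstar X) K) /\
  (hdensity_le (dual_weakstar X) K <-> hdensity_le (dual_ball_weakstar X) K).
Proof.
destruct (HB X hX) as [G [x0 [GB [Gx0 nup]]]].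
destruct (easy X K) as [e1 [e2 e3]].
destruct (hard X G x0 GB Gx0 nup K) as [h1 [h2 h3]].
tauto.
Qed.
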